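(* Let $\mathcal N$ be a monotonic max-sum $(\mathrm{Col},\delta)$-GNN with $L$ layers and aggregation parameters $k_1,\dots,k_L$, and let $C_1,\dots,C_L$ be its layer capacities. Let $\mathcal N'$ be the $(\mathrm{Col},\delta)$-GNN obtained from $\mathcal N$ by replacing each $k_\ell$ by $C_\ell$ (i.e. using $\mathrm{maxsum}_{C_\ell}$ as aggregation in layer $\ell$), leaving everything else unchanged. Then $T_{\mathcal N}(D)=T_{\mathcal N'}(D)$ for every $(\mathrm{Col},\delta)$-dataset $D$.
   Context: Graphs and GNNs. For a finite set of colours $\mathrm{Col}$ and $\delta\in\mathbb N$, a $(\mathrm{Col},\delta)$-graph is $G=\langle V,\{E^c\}_{c\in\mathrm{Col}},\lambda\rangle$ where $V$ is a finite set of vertices, $E^c\subseteq V\times V$ for each colour $c$, and $\lambda$ assigns to each $v\in V$ a feature vector $\mathbf v\in\mathbb R^\delta$; it is Boolean if all feature entries are in $\{0,1\}$. A $(\mathrm{Col},\delta)$-GNN $\mathcal N$ with $L\ge 1$ layers consists of dimensions $\delta_0=\delta,\delta_1,\dots,\delta_{L-1},\delta_L=\delta$; real matrices $A_\ell$ and $B_\ell^c$ of size $\delta_\ell\times\delta_{\ell-1}$ and bias vectors $b_\ell\in\mathbb R^{\delta_\ell}$ for $1\le\ell\le L$, $c\in\mathrm{Col}$; aggregation functions $\mathrm{agg}_\ell$ from finite real multisets to $\mathbb R$ (applied componentwise to finite multisets of vectors); an activation function $\sigma:\mathbb R\to\mathbb R$ and a classification function $\mathrm{cls}:\mathbb R\to\{0,1\}$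 (both applied componentwise). Applying $\mathcal N$ to $G$ produces labellings $\lambda_0=\lambda,\lambda_1,\dots,\lambda_L$ where, writing $\mathbf v_\ell$ for the vector of $v$ under $\lambda_\ell$, $\mathbf v_\ell=\sigma\big(A_\ell\mathbf v_{\ell-1}+\sum_{c\in\mathrm{Col}}B_\ell^c\,\mathrm{agg}_\ell(\{\!\{\mathbf u_{\ell-1}\mid (v,u)\in E^c\}\!\})+b_\ell\big)$. The result $\mathcal N(G)$ is the Boolean graph with the same vertices and edges where each $v$ is labelled by $\mathrm{cls}(\mathbf v_L)$. Canonical transformation. The $(\mathrm{Col},\delta)$-signature consists of a binary predicate $E^c$ for each $c\in\mathrm{Col}$ and unary predicates $U_1,\dots,U_\delta$; a $(\mathrm{Col},\delta)$-dataset is a finite set of variable-free atoms (facts) over this signature. Its canonical encoding $\mathrm{enc}(D)$ is the Boolean $(\mathrm{Col},\delta)$-graph with a vertex $v_t$ for each term $t$ occurring in $D$, an edge $(v_t,v_s)\in E^c$ iff $E^c(t,s)\in D$, and feature vectors with $i$-th component $1$ if $U_i(t)\in D$ and $0$ otherwise. The canonical decoding $\mathrm{dec}(G)$ of a Boolean graph whose vertices are of the form $v_t$ contains $E^c(t,s)$ for each edge $(v_t,v_s)\in E^c$ and $U_i(t)$ for each vertex $v_t$ whose $i$-th feature is $1$. Then $T_{\mathcal N}(D)=\mathrm{dec}(\mathcal N(\mathrm{enc}(D)))$. Max-sum aggregation. For $k\in\mathbb N_0\cup\{\infty\}$ and a finite real multiset $S$, let $m=\min(k,|S|)$; $\mathrm{maxsum}_k(S)=0$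 if $m=0$, and otherwise it is the sum of the $m$ largest elements of $S$, counting multiplicities. Monotonic max-sum GNN: a $(\mathrm{Col},\delta)$-GNN such that (i) all entries of every $A_\ell$ and $B_\ell^c$ are nonnegative; (ii) each $\mathrm{agg}_\ell$ is $\mathrm{maxsum}_{k_\ell}$ for some $k_\ell\in\mathbb N_0\cup\{\infty\}$; (iii) $\sigma$ is monotonically increasing, unbounded, and has range $\mathbb R_{\ge0}$; (iv) $\mathrm{cls}$ is a step function with some threshold $t\in\mathbb R$: $\mathrm{cls}(t')=0$ for $t'<t$ and $\mathrm{cls}(t')=1$ for $t'\ge t$. Sets $X_\ell^i$. A $(\mathrm{Col},\ell)$-multiset family $\mathcal Y$ assigns to each $c\in\mathrm{Col}$ a finite multiset $\mathcal Y^c$ of vectors of dimension $\delta_\ell$. For $1\le\ell\le L$, $1\le i\le\delta_\ell$, a vector $\mathbf x$ of dimension $\delta_{\ell-1}$ and a $(\mathrm{Col},\ell-1)$-multiset family $\mathcal Y$, let $\mathrm{Val}_\ell^i(\mathbf x,\mathcal Y)$ be the $i$-th component of $A_\ell\mathbf x+\sum_{c}B_\ell^c\,\mathrm{maxsum}_{k_\ell}(\mathcal Y^c)+b_\ell$. Define $X_0^i=\{0,1\}$ for $1\le i\le\delta_0$, and for $\ell\ge1$ let $X_\ell^i$ be the set of all values $\sigma(\mathrm{Val}_\ell^i(\mathbf x,\mathcal Y))$ where $\mathbf x$ ranges over vectors of dimension $\delta_{\ell-1}$ with $x_j\in X_{\ell-1}^j$ for all $j$, and $\mathcal Y$ ranges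 over $(\mathrm{Col},\ell-1)$-multiset families such that $y_j\in X_{\ell-1}^j$ for all $c$, all $\mathbf y\in\mathcal Y^c$ and all $j$. (Each $X_\ell^i\subseteq\mathbb R_{\ge0}$ and has a least nonzero element whenever it contains a nonzero element.) Capacities. Let $\alpha_L$ be the threshold of $\mathrm{cls}$. For $\ell=L,L-1,\dots,1$ in turn: let $w_\ell$ be the least nonzero entry among all entries of $A_\ell$ and of all $B_\ell^c$, and let $x_\ell$ be the least nonzero number in $\bigcup_i X_{\ell-1}^i$. If $w_\ell$ or $x_\ell$ does not exist, set $C_\ell=C_{\ell-1}=\dots=C_1=0$ and stop. Otherwise let $\beta_\ell$ be the least natural number with $\sigma(\beta_\ell)\ge\alpha_\ell$, let $b_\ell^{\min}$ be the least entry of $b_\ell$, set $C_\ell=\min\big(k_\ell,\lceil(\beta_\ell-b_\ell^{\min})/(w_\ell\cdot x_\ell)\rceil\big)$ and $\alpha_{\ell-1}=(\beta_\ell-b_\ell^{\min})/w_\ell$, and continue with $\ell-1$. The capacity of $\mathcal N$ is $C_{\mathcal N}=\max(C_1,\dots,C_L)$. *)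

(* Defs.v *)
From HB Require Import structures.
From mathcomp Require Import all_boot all_order all_algebra.
From mathcomp Require Import boolp classical_sets reals.
Set Implicit Arguments.
Unset Strict Implicit.
Unset Printing Implicit Defensive.
Import Order.TTheory GRing.Theory Num.Theory.
Local Open Scope ring_scope.
Local Open Scope classical_set_scope.

Inductive kpar := KFin of nat | KInf.

Section MaxSum.
Variable R : realType.

(* maxsum_k(S): sum of the min(k,|S|) largest elements (with multiplicity);
   a finite multiset of reals is represented by a list. *)
Definition maxsum (k : kpar) (s : seq R) : R :=
  let s' := sort (fun x y : R => y <= x) s in
  match k with
  | KFin n => \sum_(x <- take n s') x
  | KInf => \sum_(x <- s') x
  end.

Definition aggvec (k : kpar) n (s : seq 'cV[R]_n) : 'cV[R]_n :=
  \col_(j < n) maxsum k [seq (v : 'cV[R]_n) j 0 | v <- s].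
End MaxSum.

(* Layer l+1 (1 <= l+1 <= L) is stored at
   index l : nat; dim l is delta_l.  Aggregation in layer l+1 is
   maxsum_(k l), classification is the step function with threshold thr. *)
Record msgnn (R : realType) (Col : finType) (delta : nat) := MSGNN {
  nL : nat;
  dim : nat -> nat;
  dim0 : dim 0%N = delta;
  dimL : dim nL = delta;
  Amx : forall l : nat, 'M[R]_(dim l.+1, dim l);
  Bmx : forall l : nat, Col -> 'M[R]_(dim l.+1, dim l);
  bias : forall l : nat, 'cV[R]_(dim l.+1);
  kagg : nat -> kpar;
  sigma : R -> R;
  thr : R
}.

Section GNN.
Variables (R : realType) (Col : finType) (delta : nat).
Implicit Type N : msgnn R Col delta.

Definition cls N (t : R) : bool := thr N <= t.

Definition preact N (l : nat) (x : 'cV[R]_(dim N l))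
    (Y : Col -> seq 'cV[R]_(dim N l)) : 'cV[R]_(dim N l.+1) :=
  Amx N l *m x + \sum_(c : Col) (Bmx N l c *m aggvec (kagg N l) (Y c))
  + bias N l.

(* Monotonic max-sum GNN (conditions (i)-(iv); (ii),(iv) are built in). *)
Definition monotonic N : Prop :=
  [/\ forall l, (l < nL N)%N ->
        (forall i j, 0 <= Amx N l i j) /\
        (forall c i j, 0 <= Bmx N l c i j),
      forall x y, x <= y -> sigma N x <= sigma N y,
      forall M : R, exists x, M < sigma N x &
      forall y : R, 0 <= y <-> exists x, sigma N x = y].

Definition with_k N (kk : nat -> kpar) : msgnn R Col delta :=
  @MSGNN R Col delta (nL N) (dim N) (dim0 N) (dimL N) (Amx N) (Bmx N)
    (bias N) kk (sigma N) (thr N).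

Fixpoint Xs N (l : nat) : 'I_(dim N l) -> set R :=
  match l return 'I_(dim N l) -> set R with
  | 0%N => fun _ => [set x : R | x = 0 \/ x = 1]
  | l'.+1 => fun i => [set z | exists (x : 'cV[R]_(dim N l'))
                                 (Y : Col -> seq 'cV[R]_(dim N l')),
        (forall j, @Xs N l' j (x j 0)) /\
        (forall c y, y \in Y c -> forall j, @Xs N l' j (y j 0)) /\
        z = sigma N (@preact N l' x Y i 0)]
  end.

Definition is_least_nz (S : set R) (x : R) : Prop :=
  S x /\ x != 0 /\ forall y, S y -> y != 0 -> x <= y.

Definition least_nz (S : set R) : option R :=
  xget None [set o | exists x, o = Some x /\ is_least_nz S x].

(* least natural number satisfying P (0 if none) *)
Definition least_nat (P : nat -> Prop) : nat :=
  xget 0%N [set n | P n /\ forall m, P m -> (n <= m)%N].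

Definition int2nat (z : int) : nat :=
  match z with Posz n => n | Negz _ => 0%N end.

Definition kmin (k : kpar) (c : nat) : nat :=
  match k with KFin n => minn n c | KInf => c end.

Definition wmin N l : option R :=
  least_nz [set x | (exists i j, Amx N l i j = x) \/
                    (exists c i j, Bmx N l c i j = x)].

Definition xmin N l : option R :=
  least_nz [set x | exists j, @Xs N l j x].

Definition bmin N l : R :=
  xget 0 [set m | (exists i, bias N l i 0 = m) /\ forall i, m <= bias N l i 0].

(* caps N n alpha : the capacities C_1..C_n (as a function of the layer
   number, 1-based), given alpha_n; values outside 1..n are 0. *)
Fixpoint caps N (n : nat) (alpha : R) : nat -> nat :=
  match n with
  | 0%N => fun _ => 0%N
  | n'.+1 =>
    match wmin N n', xmin N n' with
    | Some w, Some x =>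
      let beta := least_nat (fun m => (0 < m)%N /\ alpha <= sigma N m%:R) in
      let b0 := bmin N n' in
      let C := kmin (kagg N n')
                 (int2nat (Num.ceil ((beta%:R - b0) / (w * x)))) in
      let alpha' := (beta%:R - b0) / w in
      fun l => if l == n'.+1 then C else caps N n' alpha' l
    | _, _ => fun _ => 0%N
    end
  end.

Definition capacity N (l : nat) : nat := caps N (nL N) (thr N) l.

Definition capGNN N : msgnn R Col delta :=
  with_k N (fun l => KFin (capacity N l.+1)).

End GNN.

Section Datasets.
Variables (Col : finType) (delta : nat) (Tm : eqType).

Inductive atom :=
  | AE of Col & Tm & Tm
  | AU of 'I_delta & Tm.       (* U_(i+1)(t) *)

Definition atom_terms (a : atom) : seq Tm :=
  match a with AE _ t s => [:: t; s] | AU _ t => [:: t] end.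

(* a dataset: a finite set of facts, given by a list *)
Definition dataset := seq atom.

Definition dterms (D : dataset) : seq Tm := undup (flatten (map atom_terms D)).

Definition isE (c : Col) (t s : Tm) (a : atom) : bool :=
  match a with AE c' t' s' => [&& c' == c, t' == t & s' == s] | _ => false end.
Definition isU (i : 'I_delta) (t : Tm) (a : atom) : bool :=
  match a with AU i' t' => (i' == i) && (t' == t) | _ => false end.

(* enc(D): vertices = terms of D; edges and Boolean features *)
Definition encE (D : dataset) (c : Col) (t s : Tm) : bool := has (isE c t s) D.
Definition encF (R : realType) (D : dataset) (t : Tm) : 'cV[R]_delta :=
  \col_i (if has (isU i t) D then 1 else 0).

Variable R : realType.

Fixpoint lab (N : msgnn R Col delta) (D : dataset) (l : nat)
  : Tm -> 'cV[R]_(dim N l) :=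
  match l return Tm -> 'cV[R]_(dim N l) with
  | 0%N => fun v => castmx (esym (dim0 N), erefl 1%N) (encF R D v)
  | l'.+1 => fun v =>
      map_mx (sigma N)
        (@preact R Col delta N l' (lab N D l' v)
           (fun c => [seq lab N D l' u | u <- dterms D & encE D c v u]))
  end.

Definition TN (N : msgnn R Col delta) (D : dataset) : atom -> bool :=
  fun a => match a with
  | AE c t s => encE D c t s
  | AU i t => (t \in dterms D) &&
              cls N (castmx (dimL N, erefl 1%N) (lab N D (nL N) t) i 0)
  end.

End Datasets.

(* Main.v *)
Require Import Defs.
From HB Require Import structures.
From mathcomp Require Import all_boot all_order all_algebra.
From mathcomp Require Import boolp classical_sets reals.
From mathcomp.algebra_tactics Require Import ring lra.
From mathcomp Require Import zify.
Import Order.TTheory GRing.Theory Num.Theory.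
Import Defs.
Local Open Scope ring_scope.
Set Implicit Arguments.
Unset Strict Implicit.
Unset Printing Implicit Defensive.


Section Lists.
Variable R : realType.

Lemma sum_ge0_seq (r : seq R) : (forall y, y \in r -> 0 <= y) -> 0 <= \sum_(y <- r) y.
Proof.
elim: r => [|a r IH] H; first by rewrite big_nil.
rewrite big_cons; apply: addr_ge0; first by apply: H; rewrite mem_head.
by apply: IH => y Hy; apply: H; rewrite in_cons Hy orbT.
Qed.

Definition geR := fun x y : R => y <= x.

Lemma geR_trans : transitive geR.
Proof. by move=> a b c; rewrite /geR => h1 h2; apply: le_trans h2 h1. Qed.

Lemma geR_total : total geR.
Proof. by move=> a b; rewrite /geR orbC; apply: le_total. Qed.

Lemma sorted_sortge (s : seq R) : sorted geR (sort geR s).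
Proof. exact: sort_sorted geR_total s. Qed.

Definition kn (k : kpar) (s : seq R) : nat :=
  match k with KFin n => n | KInf => size s end.

Lemma maxsumE k (s : seq R) :
  maxsum k s = \sum_(y <- take (kn k s) (sort geR s)) y.
Proof.
case: k => [n|] //=.
by rewrite /maxsum take_oversize // size_sort.
Qed.

Lemma sum_take_le (t : seq R) c m : (forall y, y \in t -> 0 <= y) -> (c <= m)%N ->
  \sum_(y <- take c t) y <= \sum_(y <- take m t) y.
Proof.
elim: t c m => [|a t IH] c m H Hcm; first by rewrite !big_nil.
case: c Hcm => [|c] Hcm.
  rewrite big_nil; apply: sum_ge0_seq => y /mem_take; exact: H.
case: m Hcm => [|m] //= Hcm.
rewrite !big_cons lerD2l; apply: IH => // y Hy; apply: H.
by rewrite in_cons Hy orbT.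
Qed.

Lemma maxsum_ge0 k (s : seq R) : (forall y, y \in s -> 0 <= y) -> 0 <= maxsum k s.
Proof.
move=> H; rewrite maxsumE; apply: sum_ge0_seq => y /mem_take.
by rewrite mem_sort; apply: H.
Qed.

Lemma le_sum_take (t : seq R) n y : sorted geR t -> (0 < n)%N ->
  (forall z, z \in t -> 0 <= z) -> y \in t -> y <= \sum_(z <- take n t) z.
Proof.
case: t => [|a t] // Hs; case: n => [|n] // _ H Hy.
rewrite /= big_cons.
have Hya : y <= a.
  move: Hy; rewrite in_cons => /orP [/eqP -> //|Hy].
  have := order_path_min geR_trans Hs => /allP /(_ y Hy).
  by rewrite /geR.
have : 0 <= \sum_(z <- take n t) z.
  apply: sum_ge0_seq => z /mem_take Hz; apply: H; by rewrite in_cons Hz orbT.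
move=> h; lra.
Qed.

Lemma sum_take_diff (t : seq R) c m : sorted geR t ->
  (forall z, z \in t -> 0 <= z) -> (c <= m)%N ->
  \sum_(y <- take c t) y != \sum_(y <- take m t) y ->
  exists z, [/\ z \in t, z != 0 & c%:R * z <= \sum_(y <- take c t) y].
Proof.
elim: t c m => [|a t IH] c m Hs H Hcm Hne; first by rewrite !big_nil eqxx in Hne.
have Hst : sorted geR t by apply: path_sorted Hs.
have Hall : forall y, y \in t -> y <= a.
  by move=> y Hy; have := order_path_min geR_trans Hs => /allP /(_ y Hy).
have Ht : forall z, z \in t -> 0 <= z by move=> z Hz; apply: H; rewrite in_cons Hz orbT.
case: c Hcm Hne => [|c] Hcm Hne.
  exists a; split; first by rewrite mem_head.
    apply/eqP => Ha; move: Hne; rewrite big_nil.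
    rewrite big1_seq ?eqxx // => y /andP [_ /mem_take]; rewrite in_cons => /orP [/eqP -> //|Hy].
    by apply/eqP; rewrite eq_le Ht // andbT -Ha Hall.
  by rewrite big_nil mul0r.
case: m Hcm Hne => [|m] //= Hcm Hne.
rewrite !big_cons in Hne.
have Hne' : \sum_(y <- take c t) y != \sum_(y <- take m t) y.
  by apply: contraNneq Hne => ->.
have [z [Hz Hz0 Hle]] := IH c m Hst Ht Hcm Hne'.
exists z; split => //; first by rewrite in_cons Hz orbT.
rewrite big_cons -addn1 natrD mulrDl mul1r.
have := Hall z Hz; lra.
Qed.

End Lists.

Section Step.
Variable R : realType.

Lemma int2nat_ceil (r : R) : r <= (int2nat (Num.ceil r))%:R.
Proof.
have := ceil_ge r; case: (Num.ceil r) => n /= h //.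
apply: (le_trans h); rewrite NegzE mulrNz lerNl oppr0.
by rewrite ler0z.
Qed.

Lemma kmin0 k c0 : kmin k c0 = 0%N -> c0 = 0%N \/ k = KFin 0.
Proof.
case: k => [n|] /= h; last by left.
case: (posnP c0) => [->|hc]; first by left.
right; congr KFin; lia.
Qed.

Lemma kmin_pos (s : seq R) k c0 y : (0 < kmin k c0)%N -> y \in s -> (0 < kn k s)%N.
Proof.
case: k => [n|] /= h hy; first lia.
by case: s hy.
Qed.

Lemma maxsum_ge_elem (s : seq R) k y : (0 < kn k s)%N -> y \in s ->
  (forall z, z \in s -> 0 <= z) -> y <= maxsum k s.
Proof.
move=> hk hy H; rewrite maxsumE; apply: le_sum_take => //.
- exact: sorted_sortge.
- by move=> z; rewrite mem_sort; apply: H.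
- by rewrite mem_sort.
Qed.

Lemma maxsum0 (s : seq R) : maxsum (KFin 0) s = 0.
Proof. by rewrite maxsumE /= take0 big_nil. Qed.

Lemma B2 (s : seq R) k c0 C : (forall y, y \in s -> 0 <= y) -> C = kmin k c0 ->
  maxsum k s != maxsum (KFin C) s ->
  C = c0 /\ exists z, [/\ z \in s, z != 0, C%:R * z <= maxsum (KFin C) s &
                         maxsum (KFin C) s <= maxsum k s].
Proof.
move=> H hC hne.
have Ht : forall z, z \in sort (@geR R) s -> 0 <= z by move=> z; rewrite mem_sort; apply: H.
have [eC hCk] : C = c0 /\ (C <= kn k s)%N.
  case: k hC hne => [n|] hC hne; rewrite /= in hC.
    case: (leqP n c0) => hn.
      by move: hne; rewrite hC (minn_idPl hn) eqxx.
    rewrite /=; split; lia.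
  split=> //; rewrite /= hC; case: (leqP c0 (size s)) => // hs.
  move: hne; rewrite !maxsumE /= hC !take_oversize ?size_sort ?eqxx //; lia.
split=> //.
move: hne; rewrite !maxsumE /= eq_sym => hne.
have [z [hz hz0 hle]] := sum_take_diff (sorted_sortge s) Ht hCk hne.
exists z; split=> //; first by rewrite -(mem_sort (@geR R)).
exact: sum_take_le.
Qed.

Lemma le_sum_term (I : finType) (F : I -> R) j : (forall i, 0 <= F i) -> F j <= \sum_i F i.
Proof.
move=> H; rewrite (bigD1 j) //= lerDl; apply: sumr_ge0 => i _; exact: H.
Qed.

End Step.

Lemma step (R : realType) (Col : finType) (d : nat) (Tm : eqType)
 (A : 'I_d -> R) (B : Col -> 'I_d -> R) (b : R) (k : kpar) (C : nat)
 (x x' : 'I_d -> R) (us : Col -> seq Tm) (f f' : Tm -> 'I_d -> R)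
 (w xm alpha' beta b0 : R) :
 (forall j, 0 <= A j) -> (forall c j, 0 <= B c j) ->
 0 < w -> (forall j, A j != 0 -> w <= A j) -> (forall c j, B c j != 0 -> w <= B c j) ->
 (forall j, 0 <= x j) -> (forall j, 0 <= x' j) ->
 (forall u j, 0 <= f u j) -> (forall u j, 0 <= f' u j) ->
 (forall j, x j = x' j \/ (alpha' <= x j /\ alpha' <= x' j)) ->
 (forall u j, f u j = f' u j \/ (alpha' <= f u j /\ alpha' <= f' u j)) ->
 0 < xm -> (forall u j, f u j != 0 -> xm <= f u j) ->
 b0 <= b -> alpha' = (beta - b0) / w ->
 C = kmin k (int2nat (Num.ceil ((beta - b0) / (w * xm)))) ->
 let V := \sum_j A j * x j + \sum_c \sum_j B c j * maxsum k [seq f u j | u <- us c] + b in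
 let V' := \sum_j A j * x' j + \sum_c \sum_j B c j * maxsum (KFin C) [seq f' u j | u <- us c] + b in
 V = V' \/ (beta <= V /\ beta <= V').
Proof.
move=> hA hB hw hwA hwB hx hx' hf hf' IHx IHf hxm hxmf hb0 hal hC V V'.
set r := (beta - b0) / (w * xm).
set c0 := int2nat (Num.ceil r).
have Hr : r <= c0%:R by apply: int2nat_ceil.
have Hrw : r * (w * xm) = beta - b0 by rewrite /r divfK // mulf_neq0 // gt_eqF.
have Haw : w * alpha' = beta - b0 by rewrite hal mulrC divfK // gt_eqF.
have Hs0 : forall c j, forall y, y \in [seq f u j | u <- us c] -> 0 <= y.
  by move=> c j y /mapP [u _ ->]; apply: hf.
have Hs0' : forall c j, forall y, y \in [seq f' u j | u <- us c] -> 0 <= y.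
  by move=> c j y /mapP [u _ ->]; apply: hf'.
set m := fun c j => maxsum k [seq f u j | u <- us c].
set m' := fun c j => maxsum (KFin C) [seq f' u j | u <- us c].
have Hm : forall c j, 0 <= m c j by move=> c j; apply: maxsum_ge0; apply: Hs0.
have Hm' : forall c j, 0 <= m' c j by move=> c j; apply: maxsum_ge0; apply: Hs0'.
have lowA : forall j, A j * x j + b <= V.
  move=> j; rewrite /V lerD2r -[X in X <= _]addr0; apply: lerD.
    exact: (@le_sum_term _ _ (fun j0 => A j0 * x j0) j (fun i => mulr_ge0 (hA i) (hx i))).
  by apply: sumr_ge0 => c _; apply: sumr_ge0 => i _; apply: mulr_ge0 => //; apply: Hm.
have lowA' : forall j, A j * x' j + b <= V'.
  move=> j; rewrite /V' lerD2r -[X in X <= _]addr0; apply: lerD.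
    exact: (@le_sum_term _ _ (fun j0 => A j0 * x' j0) j (fun i => mulr_ge0 (hA i) (hx' i))).
  by apply: sumr_ge0 => c _; apply: sumr_ge0 => i _; apply: mulr_ge0 => //; apply: Hm'.
have lowB : forall c j, B c j * m c j + b <= V.
  move=> c j; rewrite /V lerD2r -[X in X <= _]add0r; apply: lerD.
    by apply: sumr_ge0 => i _; apply: mulr_ge0.
  apply: (le_trans (@le_sum_term _ _ (fun j0 => B c j0 * m c j0) j (fun i => mulr_ge0 (hB c i) (Hm c i)))).
  exact: (@le_sum_term _ _ (fun c0 => \sum_j0 B c0 j0 * m c0 j0) c
     (fun c' => sumr_ge0 _ (fun i _ => mulr_ge0 (hB c' i) (Hm c' i)))).
have lowB' : forall c j, B c j * m' c j + b <= V'.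
  move=> c j; rewrite /V' lerD2r -[X in X <= _]add0r; apply: lerD.
    by apply: sumr_ge0 => i _; apply: mulr_ge0.
  apply: (le_trans (@le_sum_term _ _ (fun j0 => B c j0 * m' c j0) j (fun i => mulr_ge0 (hB c i) (Hm' c i)))).
  exact: (@le_sum_term _ _ (fun c0 => \sum_j0 B c0 j0 * m' c0 j0) c
     (fun c' => sumr_ge0 _ (fun i _ => mulr_ge0 (hB c' i) (Hm' c' i)))).
have lowb : b <= V.
  rewrite /V lerDr; apply: addr_ge0; apply: sumr_ge0 => i _.
    by apply: mulr_ge0.
  by apply: sumr_ge0 => j _; apply: mulr_ge0 => //; apply: Hm.
have lowb' : b <= V'.
  rewrite /V' lerDr; apply: addr_ge0; apply: sumr_ge0 => i _.
    by apply: mulr_ge0.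
  by apply: sumr_ge0 => j _; apply: mulr_ge0 => //; apply: Hm'.
case: (pselect (exists j, A j != 0 /\ x j != x' j)) => [[j [HA Hx]]|nA].
  right; have [e|[h1 h2]] := IHx j; first by rewrite e eqxx in Hx.
  have := hwA j HA; have := lowA j; have := lowA' j; have := hx j; have := hx' j.
  move=> *; split; nra.
have eqA : forall j, A j * x j = A j * x' j.
  move=> j; case: (eqVneq (A j) 0) => [->|HA]; first by rewrite !mul0r.
  case: (eqVneq (x j) (x' j)) => [->//|Hx].
  by exfalso; apply: nA; exists j; split.
case: (pselect (exists c j, B c j != 0 /\ m c j != m' c j)) => [[c [j [HB Hne]]]|nB]; last first.
  left; rewrite /V /V'; congr (_ + _ + _); first by apply: eq_bigr => j _; apply: eqA.
  apply: eq_bigr => c _; apply: eq_bigr => j _.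
  case: (eqVneq (B c j) 0) => [->|HB]; first by rewrite !mul0r.
  case: (eqVneq (m c j) (m' c j)) => [e|Hne]; first by rewrite -/(m c j) e.
  by exfalso; apply: nB; exists c, j; split.
have HwB := hwB c j HB.
case: (pselect (exists u, u \in us c /\ f u j != f' u j)) => [[u [Hu Hf]]|nf].
  have [e|[h1 h2]] := IHf u j; first by rewrite e eqxx in Hf.
  case: (posnP C) => HC0.
    have [c00|k0] := kmin0 (esym (etrans (esym HC0) hC)).
      right; have : r <= 0 by move: Hr; rewrite /c0 /r c00.
      have : 0 < w * xm by apply: mulr_gt0.
      move=> *; split; nra.
    by move: Hne; rewrite /m /m' k0 HC0 !maxsum0 eqxx.
  have Hk : (0 < kn k [seq f u j | u <- us c])%N.
    apply: (@kmin_pos _ _ k c0 (f u j)); first by rewrite -hC.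
    exact: map_f.
  have Hk' : (0 < kn (KFin C) [seq f' u j | u <- us c])%N by [].
  have e1 : f u j <= m c j by apply: maxsum_ge_elem => //; [exact: map_f | exact: Hs0].
  have e2 : f' u j <= m' c j by apply: maxsum_ge_elem => //; [exact: map_f | exact: Hs0'].
  have := lowB c j; have := lowB' c j; have := hf u j; have := hf' u j.
  move=> *; right; split; nra.
have Hs : [seq f u j | u <- us c] = [seq f' u j | u <- us c].
  apply/eq_in_map => u Hu; case: (eqVneq (f u j) (f' u j)) => // Hf.
  by exfalso; apply: nf; exists u; split.
move: Hne; rewrite /m' -Hs => Hne.
have [eC [z [Hz Hz0 Hle Hle2]]] := B2 (Hs0 c j) hC Hne.
have Hzx : xm <= z.
  by move: Hz Hz0 => /mapP [u _ ->]; apply: hxmf.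
have Hc0 : c0%:R * xm <= m' c j.
  rewrite /m' -Hs /c0 -eC; apply: le_trans Hle.
  by rewrite ler_wpM2l.
have hrw : beta - b0 <= w * (c0%:R * xm).
  rewrite -Hrw mulrCA; apply: ler_wpM2l; [exact: ltW | apply: ler_wpM2r => //; exact: ltW].

have Hm'B : beta - b0 <= B c j * m' c j.
  apply: (le_trans hrw); apply: (@le_trans _ _ (w * m' c j)).
    by apply: ler_wpM2l; [apply: ltW | ].
  by apply: ler_wpM2r.
have Hmm : m' c j <= m c j by rewrite /m' -Hs.
have HmB : B c j * m' c j <= B c j * m c j by apply: ler_wpM2l.
have := lowB c j; have := lowB' c j.
move=> *; right; split; lra.
Qed.

Section Cover.
Variable R : realType.

Definition covered (S : set R) :=
  forall M : R, exists s : seq R, forall y, S y -> y <= M -> y \in s.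

Lemma seq_min (s : seq R) y0 : y0 \in s -> exists m, m \in s /\ forall y, y \in s -> m <= y.
Proof.
elim: s y0 => [|a s IH] y0 //= hy.
case: (pselect (exists y, y \in s)) => [[y hy']|ns].
  have [m [hm hmin]] := IH _ hy'.
  case: (leP a m) => ham.
    exists a; split; first by rewrite mem_head.
    move=> z; rewrite in_cons => /orP [/eqP -> //|hz]; exact: le_trans ham (hmin z hz).
  exists m; split; first by rewrite in_cons hm orbT.
  move=> z; rewrite in_cons => /orP [/eqP ->|hz]; [exact: ltW | exact: hmin].
exists a; split; first by rewrite mem_head.
move=> z; rewrite in_cons => /orP [/eqP -> //|hz]; by exfalso; apply: ns; exists z.
Qed.

Lemma least_ex (S : set R) : covered S -> forall y0, S y0 -> y0 != 0 ->
  exists x, is_least_nz S x.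
Proof.
move=> hc y0 hy0 hnz.
have [s hs] := hc y0.
set s' := [seq y <- s | `[< S y >] && (y != 0)].
have hin : y0 \in s'.
  rewrite mem_filter; apply/andP; split; [apply/andP; split; [exact/asboolP | exact: hnz] | exact: hs].

have [m [hm hmin]] := seq_min hin.
move: hm; rewrite mem_filter => /andP [/andP [/asboolP hSm hm0] _].
exists m; split => //; split => // y hy hy0'.
case: (leP y y0) => hyy.
  apply: hmin; rewrite mem_filter hy0' andbT hs // andbT; exact/asboolP.
apply: le_trans (ltW hyy); apply: hmin; exact: hin.
Qed.

Lemma least_nzP (S : set R) : match least_nz S with
  | Some x => is_least_nz S x | None => forall x, ~ is_least_nz S x end.
Proof.
rewrite /least_nz; case: xgetP => [o -> [x [-> hx]] // | hn].
by move=> x hx; apply: (hn (Some x)); exists x.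
Qed.

Lemma least_nz_None (S : set R) : covered S -> least_nz S = None -> forall y, S y -> y = 0.
Proof.
move=> hc hN y hy; apply/eqP; apply: contraT => hy0.
have [x hx] := least_ex hc hy hy0.
by have := least_nzP S; rewrite hN => /(_ x).
Qed.

Fixpoint sums_upto (n : nat) (L : seq R) : seq R :=
  match n with
  | 0%N => [:: 0]
  | n'.+1 => 0 :: [seq a + z | a <- L, z <- sums_upto n' L]
  end.

Lemma sums_upto0 n L : 0 \in sums_upto n L.
Proof. by case: n => [|n] /=; rewrite mem_head. Qed.

Lemma sums_uptoP (r : seq R) n L : (size r <= n)%N -> (forall y, y \in r -> y \in L) ->
  \sum_(y <- r) y \in sums_upto n L.
Proof.
elim: r n => [|a r IH] n hs hL; first by rewrite big_nil sums_upto0.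
case: n hs => [|n] //= hs.
rewrite big_cons in_cons; apply/orP; right.
apply: allpairs_f; first by apply: hL; rewrite mem_head.
apply: IH => // y hy; apply: hL; by rewrite in_cons hy orbT.
Qed.

Lemma elem_le_sum (r : seq R) y : (forall z, z \in r -> 0 <= z) -> y \in r -> y <= \sum_(z <- r) z.
Proof.
elim: r => [|a r IH] // H; rewrite in_cons big_cons => /orP [/eqP ->|hy].
  rewrite lerDl; apply: sum_ge0_seq => z hz; apply: H; by rewrite in_cons hz orbT.
have h1 : 0 <= a by apply: H; rewrite mem_head.
have := IH (fun z hz => H z (introT orP (or_intror hz))) hy; lra.
Qed.

Lemma size_le_sum (r : seq R) m : (forall z, z \in r -> m <= z) -> (size r)%:R * m <= \sum_(z <- r) z.
Proof.
elim: r => [|a r IH] H; first by rewrite big_nil mul0r.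
rewrite big_cons /= -addn1 natrD mulrDl mul1r.
have h1 : m <= a by apply: H; rewrite mem_head.
have := IH (fun z hz => H z (introT orP (or_intror hz))); lra.
Qed.

Definition sumset (S : set R) : set R :=
  [set z | exists r : seq R, (forall y, y \in r -> S y) /\ z = \sum_(y <- r) y].

Lemma sumset_cover (S : set R) : (forall y, S y -> 0 <= y) -> covered S -> covered (sumset S).
Proof.
move=> hnn hc M.
case: (ltP M 0) => hM.
  exists [::] => z [r [hr ->]] hz; exfalso.
  have : 0 <= \sum_(y <- r) y by apply: sum_ge0_seq => y /hr /hnn.
  lra.
have [s hs] := hc M.
set q := [seq y <- s | 0 < y].
have [m [hm hmin]] := seq_min (mem_head 1 q).
have hm0 : 0 < m.
  move: hm; rewrite in_cons => /orP [/eqP -> //|]; by rewrite mem_filter => /andP [].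
set n := Num.bound (M / m).
have hn : M / m < n%:R by apply: archi_boundP; apply: divr_ge0 => //; exact: ltW.
exists (sums_upto n q) => z [r [hr ->]] hz.
have hr0 : forall y, y \in r -> 0 <= y by move=> y /hr /hnn.
have heq : \sum_(y <- r) y = \sum_(y <- [seq y <- r | 0 < y]) y.
  rewrite big_filter [RHS]big_mkcond [LHS]big_seq [RHS]big_seq; apply: eq_bigr => y hy.
  case: ifP => // hy0; apply/eqP; rewrite eq_le hr0 // andbT; by rewrite leNgt hy0.
have hz0 := hz; rewrite heq in hz0; rewrite heq.
have hsub : forall y, y \in [seq y <- r | 0 < y] -> y \in q.
  move=> y; rewrite mem_filter => /andP [hy0 hy].
  rewrite mem_filter hy0 /=; apply: hs; first exact: hr.
  apply: le_trans hz; exact: elem_le_sum.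
apply: sums_uptoP => //.
have hsz := size_le_sum (r := [seq y <- r | 0 < y]) (m := m)
  (fun z hz => hmin z (introT orP (or_intror (hsub z hz)))).
have hsum := hz0.
rewrite leqNgt; apply/negP => hlt.
have : n%:R <= (size [seq y <- r | 0 < y])%:R :> R by rewrite ler_nat ltnW.
move=> hle.
have : n%:R * m <= M by apply: le_trans hsum; apply: le_trans hsz; apply: ler_wpM2r => //; exact: ltW.
rewrite -ler_pdivlMr //; lra.
Qed.

End Cover.

Local Open Scope classical_set_scope.

Section CoverComb.
Variable R : realType.
Implicit Types S : set R.

Lemma cover_sub S S' : (forall y, S y -> S' y) -> covered S' -> covered S.
Proof. move=> h hc M; have [s hs] := hc M; exists s => y hy; exact/hs/h. Qed.

Lemma cover_U S1 S2 : covered S1 -> covered S2 -> covered [set y | S1 y \/ S2 y].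
Proof.
move=> h1 h2 M; have [s1 hs1] := h1 M; have [s2 hs2] := h2 M.
exists (s1 ++ s2) => y [hy|hy] hM; rewrite mem_cat; apply/orP; [left; exact: hs1|right; exact: hs2].
Qed.

Lemma cover_bigU (I : finType) (S : I -> set R) : (forall i, covered (S i)) ->
  covered [set y | exists i, S i y].
Proof.
move=> hc M.
have [g hg] := choice (fun i => hc i M).
exists (flatten [seq g i | i <- enum I]) => y [i hy] hM.
apply/flattenP; exists (g i); first by apply: map_f; rewrite mem_enum.
exact: hg.
Qed.

Definition scaleS (a : R) S := [set z | exists y, S y /\ z = a * y].

Lemma cover_scale a S : 0 <= a -> covered S -> covered (scaleS a S).
Proof.
move=> ha hc M.
case: (eqVneq a 0) => [->|ha0].
  by exists [:: 0] => z [y [_ ->]] _; rewrite mul0r mem_head.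
have hap : 0 < a by rewrite lt_def ha0 ha.
have [s hs] := hc (M / a).
exists [seq a * y | y <- s] => z [y [hy ->]] hz.
apply: map_f; apply: hs => //; rewrite ler_pdivlMr // mulrC //.
Qed.

Definition shiftS (b : R) S := [set z | exists y, S y /\ z = y + b].

Lemma cover_shift b S : covered S -> covered (shiftS b S).
Proof.
move=> hc M; have [s hs] := hc (M - b).
exists [seq y + b | y <- s] => z [y [hy ->]] hz.
apply: map_f; apply: hs => //; lra.
Qed.

Lemma cover_sigma (sg : R -> R) S : (forall x y, x <= y -> sg x <= sg y) ->
  (forall M, exists x, M < sg x) -> covered S -> covered [set z | exists y, S y /\ z = sg y].
Proof.
move=> hm hu hc M.
have [t ht] := hu M.
have [s hs] := hc t.
exists [seq sg y | y <- s] => z [y [hy ->]] hz.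
apply: map_f; apply: hs => //.
case: (leP y t) => // hty; exfalso.
have := hm _ _ (ltW hty); lra.
Qed.

Lemma sumset_add S x y : sumset S x -> sumset S y -> sumset S (x + y).
Proof.
move=> [r1 [h1 ->]] [r2 [h2 ->]]; exists (r1 ++ r2); split; last by rewrite big_cat.
by move=> z; rewrite mem_cat => /orP [/h1|/h2].
Qed.

Lemma sumset0 S : sumset S 0.
Proof. by exists [::]; split => //; rewrite big_nil. Qed.

Lemma sumset1 S y : S y -> sumset S y.
Proof. by move=> hy; exists [:: y]; split; [move=> z; rewrite inE => /eqP -> | rewrite big_seq1]. Qed.

Lemma sumset_sum S (I : finType) (F : I -> R) : (forall i, sumset S (F i)) -> sumset S (\sum_i F i).
Proof.
move=> h; apply: (big_ind (sumset S)); [exact: sumset0 | exact: sumset_add | move=> i _; exact: h].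
Qed.

Lemma sumset_mono S S' : (forall y, S y -> S' y) -> forall z, sumset S z -> sumset S' z.
Proof. by move=> h z [r [hr ->]]; exists r; split => // y /hr /h. Qed.

Lemma sumset_ge0 S : (forall y, S y -> 0 <= y) -> forall z, sumset S z -> 0 <= z.
Proof. by move=> h z [r [hr ->]]; apply: sum_ge0_seq => y /hr /h. Qed.

Lemma maxsum_sumset S k (s : seq R) : (forall y, y \in s -> S y) -> sumset S (maxsum k s).
Proof.
move=> h; rewrite maxsumE; exists (take (kn k s) (sort (@geR R) s)); split => //.
by move=> y /mem_take; rewrite mem_sort; apply: h.
Qed.

Lemma maxsum_zero k (s : seq R) : (forall y, y \in s -> y = 0) -> maxsum k s = 0.
Proof.
move=> h; rewrite maxsumE big1_seq // => y /andP [_ /mem_take].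
by rewrite mem_sort; apply: h.
Qed.

End CoverComb.

Local Open Scope classical_set_scope.

Notation XS N l := (@Xs _ _ _ N l).
Notation PRE N l := (@preact _ _ _ N l).

Section GNNL.
Variables (R : realType) (Col : finType) (delta : nat).
Implicit Type N : msgnn R Col delta.

Lemma preactE N l x Y (i : 'I_(dim N l.+1)) :
  PRE N l x Y i 0 = \sum_j Amx N l i j * x j 0 +
    \sum_c \sum_j Bmx N l c i j * maxsum (kagg N l) [seq (y : 'cV[R]_(dim N l)) j 0 | y <- Y c] + bias N l i 0.
Proof.
rewrite /preact mxE [in LHS]mxE summxE; congr (_ + _ + _).
  by rewrite mxE.
apply: eq_bigr => c _; rewrite mxE; apply: eq_bigr => j _.
by rewrite /aggvec mxE.
Qed.

Lemma Xs_ge0 N l j y : (forall t, 0 <= sigma N t) -> XS N l j y -> 0 <= y.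
Proof.
move=> hs; case: l j => [|l] j /=; first by case=> ->; rewrite ?ler01.
by case=> x [Y [_ [_ ->]]].
Qed.

Definition UX N l : set R := [set y | exists j, XS N l j y].

Lemma cover_X N : monotonic N -> forall l, (l <= nL N)%N -> covered (UX N l).
Proof.
case=> hAB hmon hunb hrng.
have hs : forall t, 0 <= sigma N t by move=> t; apply/hrng; exists t.
elim=> [|l IH] hl.
  move=> M; exists [:: 0; 1] => y [j [->|->]] _; by rewrite !inE eqxx ?orbT.
have hl' : (l < nL N)%N by [].
have hU := IH (ltnW hl').
have [hA hB] := hAB l hl'.
have hU0 : forall y, UX N l y -> 0 <= y by move=> y [j hj]; exact: Xs_ge0 hj.
apply: cover_bigU => i.
set SA := [set z | exists j, scaleS (Amx N l i j) (UX N l) z].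
set SB := [set z | exists c, [set z | exists j, scaleS (Bmx N l c i j) (sumset (UX N l)) z] z].
set V := shiftS (bias N l i 0) (sumset [set z | SA z \/ SB z]).
apply: (@cover_sub _ _ [set z | exists y, V y /\ z = sigma N y]).
  move=> z /= [x [Y [hx [hY ->]]]].
  exists (PRE N l x Y i 0); split => //.
  rewrite preactE; exists (\sum_j Amx N l i j * x j 0 +
    \sum_c \sum_j Bmx N l c i j * maxsum (kagg N l) [seq (y : 'cV[R]_(dim N l)) j 0 | y <- Y c]); split => //.
  apply: sumset_add.
    apply: sumset_sum => j; apply: sumset1; left; exists j, (x j 0); split => //.
    by exists j.
  apply: sumset_sum => c; apply: sumset_sum => j; apply: sumset1; right.
  exists c, j, (maxsum (kagg N l) [seq (y : 'cV[R]_(dim N l)) j 0 | y <- Y c]); split => //.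
  apply: maxsum_sumset => y /mapP [v hv ->]; rewrite /UX /=; exists j; exact: (hY c v hv j).
apply: cover_sigma => //.
apply: cover_shift.
apply: sumset_cover.
  move=> z [[j [y [hy ->]]]|[c [j [y [hy ->]]]]]; apply: mulr_ge0 => //.
    exact: hU0.
  exact: sumset_ge0 hU0 _ hy.
apply: cover_U.
  apply: cover_bigU => j; exact: cover_scale.
apply: cover_bigU => c; apply: cover_bigU => j; apply: cover_scale => //.
exact: sumset_cover.
Qed.

End GNNL.

Local Open Scope classical_set_scope.


Section Labs.
Variables (R : realType) (Col : finType) (delta : nat) (Tm : eqType).
Implicit Type N : msgnn R Col delta.
Implicit Type D : dataset Col delta Tm.

Lemma lab_ge0 N D l v j : (forall t, 0 <= sigma N t) -> 0 <= lab N D l v j 0.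
Proof.
move=> hs; case: l j => [|l] j /=.
  by rewrite castmxE mxE; case: ifP => _; rewrite ?ler01.
by rewrite mxE.
Qed.

Lemma labX N D l : forall v j, XS N l j (lab N D l v j 0).
Proof.
elim: l => [|l IH] v j.
  by rewrite /= castmxE mxE; case: ifP => _; [right|left].
rewrite /=.
exists (lab N D l v), (fun c => [seq lab N D l u | u <- dterms D & encE D c v u]).
split; first by move=> j'; exact: IH.
split; last by rewrite mxE.
by move=> c y /mapP [u _ ->] j'; exact: IH.
Qed.

Lemma labX0 N D kk m : (forall l, (l < m)%N -> kk l = KFin 0) ->
  forall l, (l <= m)%N -> forall v j, XS N l j (lab (with_k N kk) D l v j 0).
Proof.
move=> hk; elim=> [|l IH] hl v j.
  by rewrite /= castmxE mxE; case: ifP => _; [right|left].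
rewrite /=.
exists (lab (with_k N kk) D l v), (fun _ => [::]).
split; first by move=> j'; exact: IH (ltnW hl) v j'.
split => //.
rewrite mxE; congr (sigma N _).
rewrite (@preactE _ _ _ (with_k N kk)) preactE /=; congr (_ + _ + _); apply: eq_bigr => c _; apply: eq_bigr => j' _.
by rewrite hk // maxsum0 maxsum_zero.
Qed.

End Labs.

Local Open Scope classical_set_scope.

Section Aux.
Variables (R : realType) (Col : finType) (delta : nat).
Implicit Type N : msgnn R Col delta.

Lemma bmin_le N l i : bmin N l <= bias N l i 0.
Proof.
rewrite /bmin.
have hin : bias N l i 0 \in [seq bias N l j 0 | j <- enum 'I_(dim N l.+1)].
  by apply: map_f; rewrite mem_enum.
have [m [hm hmin]] := seq_min hin.
have hex : exists m, (exists i, bias N l i 0 = m) /\ forall i, m <= bias N l i 0.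
  exists m; split.
    by move: hm => /mapP [j _ ->]; exists j.
  by move=> i'; apply: hmin; apply: map_f; rewrite mem_enum.
have [_ h] := xgetPex 0 hex; exact: h.
Qed.

Lemma beta_spec N (alpha : R) : (forall x y, x <= y -> sigma N x <= sigma N y) ->
  (forall M, exists x, M < sigma N x) ->
  alpha <= sigma N (least_nat (fun m => (0 < m)%N /\ alpha <= sigma N m%:R))%:R.
Proof.
move=> hm hu.
set P := fun m => (0 < m)%N /\ alpha <= sigma N m%:R.
have [x hx] := hu alpha.
have hPm : P (Num.bound `|x|).+1.
  split => //; apply: le_trans (ltW hx) _; apply: hm.
  apply: le_trans (ler_norm x) _; apply: ltW; apply: lt_le_trans (archi_boundP (normr_ge0 x)) _.
  by rewrite ler_nat.
have hexb : exists n, `[< P n >] by exists (Num.bound `|x|).+1; apply/asboolP.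
case: (ex_minnP hexb) => n /asboolP hn hmin.
have hex : exists n, P n /\ forall m, P m -> (n <= m)%N.
  by exists n; split => // m hm'; apply: hmin; apply/asboolP.
by have [[_ h] _] := xgetPex 0%N hex.
Qed.

Lemma wmin_None N l : (forall i j, 0 <= Amx N l i j) -> (forall c i j, 0 <= Bmx N l c i j) ->
  wmin N l = None -> (forall i j, Amx N l i j = 0) /\ (forall c i j, Bmx N l c i j = 0).
Proof.
move=> hA hB hN.
set S := [set x | (exists i j, Amx N l i j = x) \/ (exists c i j, Bmx N l c i j = x)].
have hc : covered S.
  apply: (@cover_sub _ _ [set y | [set y | exists i, [set y | exists j, [set y | y = Amx N l i j] y] y] y \/
     [set y | exists c, [set y | exists i, [set y | exists j, [set y | y = Bmx N l c i j] y] y] y] y]).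
    by move=> y [[i [j <-]]|[c [i [j <-]]]]; [left; exists i, j | right; exists c, i, j].
  have h1 : forall a : R, covered [set y | y = a] by move=> a M; exists [:: a] => y -> _; rewrite mem_head.
  apply: cover_U; first by apply: cover_bigU => i; apply: cover_bigU => j; apply: h1.
  by apply: cover_bigU => c; apply: cover_bigU => i; apply: cover_bigU => j; apply: h1.
have := least_nz_None hc hN.
move=> h; split.
  by move=> i j; apply: h; left; exists i, j.
by move=> c i j; apply: h; right; exists c, i, j.
Qed.

End Aux.

Local Open Scope classical_set_scope.

Lemma some_least (R : realType) (S : set R) x : least_nz S = Some x -> is_least_nz S x.
Proof. by move=> e; have := least_nzP S; rewrite e. Qed.

Section Main.
Variables (R : realType) (Col : finType) (delta : nat) (Tm : eqType).
Implicit Type N : msgnn R Col delta.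
Implicit Type D : dataset Col delta Tm.

Lemma main N D : monotonic N -> forall n, (n <= nL N)%N -> forall alpha kk,
  (forall l, (l < n)%N -> kk l = KFin (caps N n alpha l.+1)) ->
  forall v (i : 'I_(dim N n)),
    lab N D n v i 0 = lab (with_k N kk) D n v i 0 \/
    (alpha <= lab N D n v i 0 /\ alpha <= lab (with_k N kk) D n v i 0).
Proof.
move=> hmono; have [hAB hmon hunb hrng] := hmono.
have hs : forall t, 0 <= sigma N t by move=> t; apply/hrng; exists t.
elim=> [|n IH] hn alpha kk hkk v i; first by left.
have hn' : (n < nL N)%N by [].
have [hA hB] := hAB n hn'.
move: hkk; cbn [caps].
case Ew: (wmin N n) => [w|]; last first.
  move=> hkk; have [hA0 hB0] := wmin_None hA hB Ew.
  left; rewrite /= [LHS]mxE [RHS]mxE; congr (sigma N _).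
  rewrite (@preactE _ _ _ (with_k N kk)) preactE /=.
  have z1 : forall (f : 'I_(dim N n) -> R), \sum_j Amx N n i j * f j = 0.
    by move=> f; apply: big1 => j _; rewrite hA0 mul0r.
  have z2 : forall (g : Col -> 'I_(dim N n) -> R), \sum_c \sum_j Bmx N n c i j * g c j = 0.
    by move=> g; apply: big1 => c _; apply: big1 => j _; rewrite hB0 mul0r.
  by rewrite !z1 !z2.
case Ex: (xmin N n) => [x|] /=; last first.
  move=> hkk.
  have hkk0 : forall l, (l < n)%N -> kk l = KFin 0 by move=> l hl; rewrite hkk // ltnS ltnW.
  have hU0 := least_nz_None (cover_X hmono (ltnW hn)) Ex.
  have zN : forall u j, lab N D n u j 0 = 0 by move=> u j; apply: hU0; exists j; exact: labX.
  have zN' : forall u j, lab (with_k N kk) D n u j 0 = 0.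
    by move=> u j; apply: hU0; exists j; exact: (@labX0 _ _ _ _ N D kk n hkk0 n (leqnn n) u j).
  left; rewrite /= [LHS]mxE [RHS]mxE; congr (sigma N _).
  rewrite (@preactE _ _ _ (with_k N kk)) preactE /=.
  congr (_ + _ + _).
    by apply: eq_bigr => j _; rewrite zN zN'.
  apply: eq_bigr => c _; apply: eq_bigr => j _.
  rewrite !maxsum_zero // => y /mapP [y' /mapP [u _ ->] ->]; [exact: zN' | exact: zN].
set P := (fun m : nat => (0 < m)%N /\ alpha <= sigma N m%:R).
set beta := least_nat P.
set b0 := bmin N n.
set alpha' := (beta%:R - b0) / w.
set C := kmin (kagg N n) (int2nat (Num.ceil ((beta%:R - b0) / (w * x)))).
move=> hkk.
have hkn : kk n = KFin C by move: (hkk n (ltnSn n)); rewrite eqxx.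
have hkk' : forall l, (l < n)%N -> kk l = KFin (caps N n alpha' l.+1).
  move=> l hl; have hne : (l.+1 == n.+1) = false by rewrite eqSS ltn_eqF.
  by move: (hkk l (ltnW hl)); rewrite hne.
have IHn := IH (ltnW hn) alpha' kk hkk'.
have [hwS [hw0 hwmin]] := some_least Ew.
have [hxS [hx0 hxmin]] := some_least Ex.
have hwp : 0 < w.
  rewrite lt_def hw0 /=; case: hwS => [[i' [j' <-]]|[c [i' [j' <-]]]]; [exact: hA | exact: hB].
have hxp : 0 < x.
  rewrite lt_def hx0 /=; case: hxS => j' hj'; exact: Xs_ge0 hs hj'.
have hbeta : alpha <= sigma N beta%:R by apply: beta_spec.
have key : forall V V' : R, V = V' \/ (beta%:R <= V /\ beta%:R <= V') ->
    sigma N V = sigma N V' \/ (alpha <= sigma N V /\ alpha <= sigma N V').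
  move=> V V' [->|[h1 h2]]; first by left.
  by right; split; apply: le_trans hbeta _; apply: hmon.
set us := fun c => [seq u <- dterms D | encE D c v u].
set N' := with_k N kk.
have e1 : lab N D n.+1 v i 0 = sigma N (\sum_j Amx N n i j * lab N D n v j 0 +
   \sum_c \sum_j Bmx N n c i j * maxsum (kagg N n) [seq lab N D n u j 0 | u <- us c] + bias N n i 0).
  rewrite /= mxE preactE; congr (sigma N (_ + _ + _)).
  by apply: eq_bigr => c _; apply: eq_bigr => j _; rewrite -map_comp.
have e2 : lab N' D n.+1 v i 0 = sigma N (\sum_j Amx N n i j * lab N' D n v j 0 +
   \sum_c \sum_j Bmx N n c i j * maxsum (KFin C) [seq lab N' D n u j 0 | u <- us c] + bias N n i 0).
  rewrite /= mxE (@preactE _ _ _ N') /=; congr (sigma N (_ + _ + _)).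
  by apply: eq_bigr => c _; apply: eq_bigr => j _; rewrite -map_comp hkn.
rewrite e1 e2; apply: key.
have hwA : forall j, Amx N n i j != 0 -> w <= Amx N n i j.
  by move=> j hj; apply: hwmin => //; left; exists i, j.
have hwB : forall c j, Bmx N n c i j != 0 -> w <= Bmx N n c i j.
  by move=> c j hj; apply: hwmin => //; right; exists c, i, j.
have hxmf : forall u j, lab N D n u j 0 != 0 -> x <= lab N D n u j 0.
  by move=> u j hj; apply: hxmin => //; exists j; exact: labX.
have hs' : forall t, 0 <= sigma N' t by [].
have hstep := (@step R Col (dim N n) Tm (fun j => Amx N n i j) (fun c j => Bmx N n c i j)
  (bias N n i 0) (kagg N n) C (fun j => lab N D n v j 0) (fun j => lab N' D n v j 0) us
  (fun u j => lab N D n u j 0) (fun u j => lab N' D n u j 0) w x alpha' beta%:R b0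
  (hA i) (hB ^~ i) hwp hwA hwB).
exact: (hstep (fun j => @lab_ge0 _ _ _ _ N D n v j hs) (fun j => @lab_ge0 _ _ _ _ N' D n v j hs')
  (fun u j => @lab_ge0 _ _ _ _ N D n u j hs) (fun u j => @lab_ge0 _ _ _ _ N' D n u j hs') (IHn v) IHn
  hxp hxmf (@bmin_le _ _ _ N n i) erefl erefl).
Qed.

End Main.

Local Close Scope classical_set_scope.
Unset Implicit Arguments.

Theorem theorem2 (R : realType) (Col : finType) (delta : nat) (Tm : eqType)
    (N : msgnn R Col delta) :
  (1 <= nL N)%N -> monotonic N ->
  forall D : dataset Col delta Tm,
    forall a : atom Col delta Tm, TN N D a = TN (capGNN N) D a.
Proof.
move=> _ hmono D [c t s|i t] //=.
congr (_ && _).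
rewrite /cls !castmxE /=.
have := @main R Col delta Tm N D hmono (nL N) (leqnn _) (thr N)
  (fun l => KFin (capacity N l.+1)) (fun l _ => erefl) t (cast_ord (esym (dimL N)) i).
rewrite cast_ord_id /capGNN.
case=> [-> // | [h1 h2]].
by rewrite h1 h2.
Qed.
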